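(* In $A_n$, for $1\le i\le n-1$ and $a\in\mathbb{N}_0$, \[ \omega_{i+1}^a = x_{i+1}T_i\,\omega_i^a\,T_i - T_i\,\omega_i^a\,T_i\,x_i . \]
   Context: $A_n$ is the bigraded $\mathbb{Z}$-superalgebra generated by even $x_1,\dots,x_n$, even $T_1,\dots,T_{n-1}$ and odd $\omega_1,\dots,\omega_n$ with relations: $T_i^2=0$, $T_iT_j=T_jT_i$ ($|i-j|>1$), $T_iT_{i+1}T_i=T_{i+1}T_iT_{i+1}$, $x_ix_j=x_jx_i$, $T_ix_j=x_jT_i$ ($j\neq i,i+1$), $T_ix_i-x_{i+1}T_i=1$, $T_ix_{i+1}-x_iT_i=-1$, $\omega_i\omega_j=-\omega_j\omega_i$, $x_i\omega_j=\omega_jx_i$, $T_i\omega_j=\omega_jT_i$ ($i\ne j$), $T_i(\omega_i-x_{i+1}\omega_{i+1})=(\omega_i-x_{i+1}\omega_{i+1})T_i$ (equivalently, operators on $\mathbb{Z}[x]\otimes\bigwedge^\bullet(\omega)$ generated by Demazure operators and multiplications). Labeled elements: $\omega_k^0=\omega_k$, $\omega_0^a=0$, $\omega_k^a=\omega_{k-1}^{a-1}-x_k\omega_k^{a-1}$ for $a\ge1$. *)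

(* Defs.v *)
From mathcomp Require Import all_boot all_order all_algebra.
Set Implicit Arguments. Unset Strict Implicit. Unset Printing Implicit Defensive.
Import GRing.Theory.
Local Open Scope ring_scope.

(* A_n is the ring presented by
   these generators and relations, so an identity holds in A_n iff it holds
   for every such family in every ring (universal property). *)
Record An_relations (R : pzRingType) (n : nat)
    (x : nat -> R) (T : nat -> R) (w : nat -> R) : Prop := {
  rel_TT : forall i, (1 <= i <= n.-1)%N -> T i * T i = 0;
  rel_Tcomm : forall i j, (1 <= i <= n.-1)%N -> (1 <= j <= n.-1)%N ->
     (i.+1 < j)%N || (j.+1 < i)%N -> T i * T j = T j * T i;
  rel_braid : forall i, (1 <= i)%N -> (i.+1 <= n.-1)%N ->
     T i * T i.+1 * T i = T i.+1 * T i * T i.+1;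
  rel_xx : forall i j, (1 <= i <= n)%N -> (1 <= j <= n)%N -> x i * x j = x j * x i;
  rel_Tx : forall i j, (1 <= i <= n.-1)%N -> (1 <= j <= n)%N ->
     j != i -> j != i.+1 -> T i * x j = x j * T i;
  rel_Txi : forall i, (1 <= i <= n.-1)%N -> T i * x i - x i.+1 * T i = 1;
  rel_Txi1 : forall i, (1 <= i <= n.-1)%N -> T i * x i.+1 - x i * T i = -1;
  rel_ww : forall i j, (1 <= i <= n)%N -> (1 <= j <= n)%N -> w i * w j = - (w j * w i);
  rel_xw : forall i j, (1 <= i <= n)%N -> (1 <= j <= n)%N -> x i * w j = w j * x i;
  rel_Tw : forall i j, (1 <= i <= n.-1)%N -> (1 <= j <= n)%N ->
     j != i -> T i * w j = w j * T i;
  rel_Tww : forall i, (1 <= i <= n.-1)%N ->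
     T i * (w i - x i.+1 * w i.+1) = (w i - x i.+1 * w i.+1) * T i }.

Fixpoint omega_lab (R : pzRingType) (x w : nat -> R) (a k : nat) : R :=
  match k with
  | 0%N => 0
  | k'.+1 =>
      match a with
      | 0%N => w k
      | a'.+1 => omega_lab x w a' k' - x k * omega_lab x w a' k
      end
  end.

(* Main.v *)
Require Import Defs.
From mathcomp Require Import all_boot all_order all_algebra zify.
Import GRing.Theory.
Local Open Scope ring_scope.


Lemma om_x {R : pzRingType} {n : nat} {x T w : nat -> R} :
  An_relations n x T w -> forall j, (1 <= j <= n)%N ->
  forall b k, (k <= n)%N -> x j * omega_lab x w b k = omega_lab x w b k * x j.
Proof.
move=> H j hj; elim=> [|b IH] [|k] hk /=; rewrite ?mulr0 ?mul0r //.
- by apply: (rel_xw H).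
- rewrite mulrBr mulrBl IH; last by apply: ltnW.
  rewrite mulrA (rel_xx H hj) // -mulrA IH // mulrA //.
Qed.

Lemma om_T {R : pzRingType} {n : nat} {x T w : nat -> R} :
  An_relations n x T w -> forall i, (1 <= i <= n.-1)%N ->
  forall b k, (k < i)%N -> T i * omega_lab x w b k = omega_lab x w b k * T i.
Proof.
move=> H i hi; have hn : (i < n)%N by move: hi; case: (n) => [|n'] /andP[h1 h2] //=; apply: leq_trans h1 h2.
elim=> [|b IH] [|k] hk /=; rewrite ?mulr0 ?mul0r //.
- apply: (rel_Tw H hi); last by rewrite neq_ltn hk.
  by apply/andP; split=> //; apply: leq_trans (ltnW hn); exact: ltnW.
- rewrite mulrBr mulrBl IH; last by apply: ltnW.
  rewrite mulrA (rel_Tx H hi) //.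
  + by rewrite -mulrA IH // mulrA.
  + apply/andP; split=> //; lia.
  + by rewrite neq_ltn hk.
  + by rewrite eqSS neq_ltn ltnW.
Qed.
Definition Phi {R : pzRingType} (xa xb t y : R) := xb * t * y * t - t * y * t * xa.

Lemma zmod4 (V : zmodType) (A B C D : V) : (A - B) - (C - D) = (A - C) - (B - D).
Proof. by rewrite !opprD !opprK addrACA. Qed.

Lemma phi_sub (R : pzRingType) (xa xb t a b : R) :
  Phi xa xb t (a - b) = Phi xa xb t a - Phi xa xb t b.
Proof. by rewrite /Phi !(mulrBr, mulrBl) zmod4. Qed.

Lemma phi_commT (R : pzRingType) (xa xb t c : R) :
  t * c = c * t -> t * t = 0 -> Phi xa xb t c = 0.
Proof.
move=> hc ht; have z : t * (c * t) = 0 by rewrite mulrA hc -mulrA ht mulr0.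
have z2 : t * (c * (t * xa)) = 0 by rewrite (mulrA c t xa) mulrA z mul0r.
by rewrite /Phi -!mulrA z z2 mulr0 subr0.
Qed.

Lemma phi_xi (R : pzRingType) (xa xb t y : R) :
  t * xa - xb * t = 1 -> xa * y = y * xa -> xb * y = y * xb ->
  Phi xa xb t (xa * y) = xb * Phi xa xb t y - y.
Proof.
move=> h ha hb.
have e : t * xa = xb * t + 1 by rewrite -h addrC subrK.
have c1 : xb * t * (xa * y) * t = xb * (xb * t * y * t) + xb * y * t.
  by rewrite -!mulrA (mulrA t xa) e !(mulrDl, mulrDr, mul1r) !mulrA.
have c2 : t * (xa * y) * t * xa = xb * (t * y * t * xa) + y * t * xa.
  by rewrite (mulrA t xa) e !mulrDl mul1r !mulrA.
have c3 : y * t * xa = xb * y * t + y.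
  by rewrite -mulrA e mulrDr mulr1 mulrA hb.
rewrite /Phi c1 c2 c3 mulrBr opprD opprD addrA.
move: (xb * (xb * t * y * t)) (xb * y * t) (xb * (t * y * t * xa)) => A B C.
by rewrite (addrAC A) -addrA (addrA B) subrr add0r.
Qed.

Lemma phi_base (R : pzRingType) (xa xb t c : R) :
  t * xa - xb * t = 1 -> t * xb - xa * t = -1 -> t * t = 0 -> t * c = c * t -> xb * c = c * xb ->
  Phi xa xb t (xb * c) = c.
Proof.
move=> h1 h ht htc hb.
have e : t * xb = xa * t - 1 by rewrite -h addrC subrK.
have e2 : t * xb * t = - t by rewrite e mulrBl -mulrA ht mulr0 mul1r sub0r.
have e3 : t * (xb * c) * t = - (c * t) by rewrite mulrA -mulrA -htc mulrA e2 mulNr.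
rewrite /Phi e3 -(mulrA xb t (xb * c)) -(mulrA xb _ t) e3 mulNr mulrN opprK.
by rewrite mulrA hb addrC -!mulrA -mulrBr h1 mulr1.
Qed.

Theorem lemma2p4 (R : pzRingType) (n : nat) (x T w : nat -> R) :
  An_relations n x T w ->
  forall (i a : nat), (1 <= i <= n.-1)%N ->
    omega_lab x w a i.+1 =
      x i.+1 * T i * omega_lab x w a i * T i - T i * omega_lab x w a i * T i * x i.
Proof.
move=> H i a hi.
have hn : (i < n)%N by move: hi; case: (n) => [|n'] /andP[h1 h2] //=; apply: leq_trans h1 h2.
have hi1 : (1 <= i)%N by case/andP: hi.
have tt := rel_TT H hi.
have h1 := rel_Txi H hi.
have h2 := rel_Txi1 H hi.
change (omega_lab x w a i.+1 = Phi (x i) (x i.+1) (T i) (omega_lab x w a i)).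
case: i hi hn hi1 tt h1 h2 H => [//|i'] hi hn _ tt h1 h2 H.
elim: a => [|b IH] /=.
- have hu := rel_Tww H hi.
  have z : Phi (x i'.+1) (x i'.+2) (T i'.+1) (w i'.+1) -
           Phi (x i'.+1) (x i'.+2) (T i'.+1) (x i'.+2 * w i'.+2) = 0.
    by rewrite -phi_sub; apply: phi_commT.
  rewrite (subr0_eq z) phi_base //.
  + apply: (rel_Tw H hi); last by apply/eqP; lia.
    by apply/andP; split.
  + apply: (rel_xw H); by apply/andP; split.
- rewrite phi_sub (@phi_commT _ _ _ _ _ (om_T H _ hi b i' (ltnSn i')) tt).
  rewrite phi_xi //.
  + by rewrite -IH sub0r opprB.
  + apply: (om_x H); lia.
  + apply: (om_x H); lia.
Qed.
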